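(* Let $\alpha\ge 2$ be a real number, and let $Q_n=\widehat{P}_n/P_n$ (for $n\ge1$) be as defined in the context. Then the sequence $(Q_n)$ converges to some real number $r_1>1$, and it oscillates around this limit: there are arbitrarily large integers $n$ with $Q_n>r_1$, and arbitrarily large integers $n$ with $Q_n<r_1$.
   Context: For a real number $\alpha\ge 1$, define the integer sequence $(P_i)_{i\ge 0}=(P^\alpha_i)$ by $P_0=0$, $P_1=1$, and for $k\ge 1$, $P_{k+1}=P_k+P_j$, where $j\ge 1$ is the unique index with $\alpha P_{j-1}<P_k\le \alpha P_j$. For $i\ge 1$, the window of $P_i$ is $W_\alpha(P_i)=\{P_j : \alpha P_{i-1}<P_j\le \alpha P_i\}$. Let $\widehat{P}_i$ be the smallest term of the sequence $(P_m)$ that is greater than $\max W_\alpha(P_i)$ (equivalently $\widehat P_i=P_{j+1}$ where $P_j=\max W_\alpha(P_i)$), and set $Q_i=\widehat{P}_i/P_i$. *)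

(* Defs.v *)
From HB Require Import structures.
From mathcomp Require Import all_boot all_order all_algebra.
From mathcomp Require Import all_classical all_reals all_analysis.
Set Implicit Arguments. Unset Strict Implicit. Unset Printing Implicit Defensive.
Import Order.TTheory GRing.Theory Num.Theory.
Local Open Scope ring_scope.
Local Open Scope classical_set_scope.

Section PSequence.
Variables (R : realType) (alpha : R).

(* Given s = [:: P_0; ...; P_k] (k >= 1), compute P_{k+1} = P_k + P_j where
   j >= 1 is the (unique) index with alpha * P_{j-1} < P_k <= alpha * P_j.
   Such a j necessarily satisfies j <= k, so we search j among 1..k. *)
Definition next_term (s : seq nat) : nat :=
  let k := (size s).-1 in
  let pk := nth 0%N s k in
  let ok (j : nat) := (alpha * (nth 0%N s j.-1)%:R < pk%:R)
                      && (pk%:R <= alpha * (nth 0%N s j)%:R) in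
  let j := nth 0%N (iota 1 k) (find ok (iota 1 k)) in
  (pk + nth 0%N s j)%N.

(* Plist n = [:: P_0; P_1; ...; P_(n+1)] *)
Fixpoint Plist (n : nat) : seq nat :=
  match n with
  | 0 => [:: 0%N; 1%N]
  | n'.+1 => let s := Plist n' in rcons s (next_term s)
  end.

Definition P (n : nat) : nat := nth 0%N (Plist n) n.

Definition in_window (i j : nat) : bool :=
  (alpha * (P i.-1)%:R < (P j)%:R) && ((P j)%:R <= alpha * (P i)%:R).

Definition maxW (i : nat) : nat :=
  xget 0%N [set m | (exists j, in_window i j /\ m = P j)
                    /\ forall j, in_window i j -> (P j <= m)%N].

Definition Phat (i : nat) : nat :=
  xget 0%N [set h | (exists m, h = P m) /\ (maxW i < h)%N
                    /\ forall m, (maxW i < P m)%N -> (h <= P m)%N].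

Definition Q (i : nat) : R := (Phat i)%:R / (P i)%:R.

End PSequence.

(* Main.v *)
Require Import Defs.
From HB Require Import structures.
From mathcomp Require Import all_boot all_order all_algebra.
From mathcomp Require Import all_classical all_reals all_analysis.
From mathcomp Require Import ring lra zify.
Import Order.TTheory GRing.Theory Num.Theory numFieldNormedType.Exports.
Set Implicit Arguments. Unset Strict Implicit.
Local Open Scope classical_set_scope.
Local Open Scope ring_scope.

Lemma mono_le (f : nat -> nat) : (forall n, (f n <= f n.+1)%N) ->
  forall a b, (a <= b)%N -> (f a <= f b)%N.
Proof.
move=> h a b ab; rewrite -(subnKC ab); elim: (b - a)%N => [|d IH]; first by rewrite addn0.
by rewrite addnS; apply: leq_trans IH (h _).
Qed.

Lemma ev_const (f : nat -> nat) B : (forall n, (f n <= f n.+1)%N) ->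
  (forall n, (f n <= B)%N) -> exists N, forall n, (N <= n)%N -> f n = f N.
Proof.
move=> mono bnd.
suff H : forall d (g : nat -> nat), (B - g 0 <= d)%N -> (forall n, (g n <= g n.+1)%N) ->
   (forall n, (g n <= B)%N) -> exists N, forall n, (N <= n)%N -> g n = g N.
  exact: (H _ f (leqnn _) mono bnd).
elim=> [|d IH] g hd gm gb.
  exists 0%N => n _; apply/eqP; rewrite eqn_leq (mono_le gm (leq0n n)) andbT.
  have := gb n; lia.
case: (pselect (exists n, (g 0 < g n)%N)) => [[n hn]|hn].
  have [N HN] := IH (fun i => g (i + n)%N) ltac:(rewrite /= add0n; lia)
     (fun i => gm (i + n)%N) (fun i => gb (i + n)%N).
  exists (N + n)%N => k hk; have := HN (k - n)%N ltac:(lia); rewrite subnK //; lia.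
exists 0%N => n _; apply/eqP; rewrite eqn_leq (mono_le gm (leq0n n)) andbT.
rewrite leqNgt; apply/negP => h; apply: hn; by exists n.
Qed.

Section Basic.
Variables (R : realType) (alpha : R).
Hypothesis Ha : 2 <= alpha.
Local Notation p := (P alpha).

Lemma a_ge0 : 0 <= alpha. Proof. by apply: le_trans Ha. Qed.

Lemma size_Plist n : size (Plist alpha n) = n.+2.
Proof. by elim: n => [//|n IH] /=; rewrite size_rcons IH. Qed.

Lemma Plist_stable n i : (i < n.+2)%N ->
  nth 0%N (Plist alpha n.+1) i = nth 0%N (Plist alpha n) i.
Proof. by move=> hi /=; rewrite nth_rcons size_Plist hi. Qed.

Lemma nth_Plist n i : (i <= n.+1)%N -> nth 0%N (Plist alpha n) i = p i.
Proof.
elim: n i => [|n IH] i hi.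
  case: i hi => [_|i hi]; first reflexivity.
  have -> : i = 0%N by lia.
  by rewrite /P Plist_stable.
rewrite leq_eqVlt in hi; case/orP: hi => [/eqP ->|hi].
  by rewrite /P (@Plist_stable n.+1).
by rewrite Plist_stable // IH.
Qed.

Lemma p_succ2 n : p n.+2 = next_term alpha (Plist alpha n).
Proof.
rewrite /P Plist_stable // /= nth_rcons size_Plist ltnn eqxx //.
Qed.

Definition okP k j := (alpha * (p j.-1)%:R < (p k)%:R) && ((p k)%:R <= alpha * (p j)%:R).
Definition Jf k := nth 0%N (iota 1 k) (find (okP k) (iota 1 k)).

Lemma Jf_le k : (Jf k <= k)%N.
Proof.
rewrite /Jf; case: (ltnP (find (okP k) (iota 1 k)) k) => h.
  by rewrite nth_iota // add1n.
by rewrite nth_default // size_iota.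
Qed.

Lemma p_rec k : (1 <= k)%N -> p k.+1 = (p k + p (Jf k))%N.
Proof.
case: k => [//|n] _.
rewrite p_succ2 /next_term.
have -> : (size (Plist alpha n)).-1 = n.+1 by rewrite size_Plist.
rewrite nth_Plist //.
have -> : find (fun j : nat => (alpha * (nth 0%N (Plist alpha n) j.-1)%:R < (p n.+1)%:R)
      && ((p n.+1)%:R <= alpha * (nth 0%N (Plist alpha n) j)%:R)) (iota 1 n.+1)
    = find (okP n.+1) (iota 1 n.+1).
  apply: eq_in_find => j; rewrite mem_iota => /andP[h1 h2].
  rewrite /okP !nth_Plist //; lia.
by rewrite nth_Plist //; have := Jf_le n.+1; rewrite /Jf.
Qed.

Lemma p0 : p 0 = 0%N. Proof. by []. Qed.
Lemma p1 : p 1 = 1%N. Proof. by rewrite /P Plist_stable. Qed.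

Lemma p_pos k : (1 <= k)%N -> (0 < p k)%N.
Proof.
elim: k => [//|k IH] _; case: k IH => [|k] IH; first by rewrite p1.
rewrite p_rec //; have := IH isT; lia.
Qed.

Lemma le_aR (y : R) : 0 <= y -> y <= alpha * y.
Proof. move=> hy; rewrite -{1}(mul1r y) ler_wpM2r //; apply: le_trans Ha; by rewrite ler1n. Qed.

Lemma Jf_spec k : (1 <= k)%N -> [/\ (1 <= Jf k)%N, (Jf k <= k)%N & okP k (Jf k)].
Proof.
move=> hk.
have ex : exists j, (0 < j)%N && ((p k)%:R <= alpha * (p j)%:R).
  by exists k; rewrite hk /= le_aR.
case: (ex_minnP ex) => j /andP[j0 hj] jmin.
have jk : (j <= k)%N by apply: jmin; rewrite hk /= le_aR.
have okj : okP k j.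
  rewrite /okP hj andbT.
  case: j j0 hj jmin jk => [//|[|j]] _ hj jmin jk.
    by rewrite p0 mulr0 ltr0n p_pos.
  rewrite ltNge; apply/negP => h.
  have := jmin j.+1; rewrite h /= => /(_ isT); lia.
have hs : has (okP k) (iota 1 k).
  by apply/hasP; exists j => //; rewrite mem_iota; lia.
have := nth_find 0%N hs; rewrite -/(Jf k) => ok.
have := hs; rewrite has_find size_iota => hf.
split => //; last exact: Jf_le.
by rewrite /Jf nth_iota.
Qed.

Lemma p_lt_succ k : (p k < p k.+1)%N.
Proof.
case: k => [|k]; first by rewrite p0 p1.
rewrite (@p_rec k.+1) //; case: (@Jf_spec k.+1 isT) => h1 _ _.
have := @p_pos _ h1; lia.
Qed.

Lemma p_lt i j : (i < j)%N -> (p i < p j)%N.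
Proof.
elim: j => [//|j IH]; rewrite ltnS leq_eqVlt => /orP[/eqP->|h]; first exact: p_lt_succ.
exact: ltn_trans (IH h) (p_lt_succ j).
Qed.

Lemma p_le i j : (i <= j)%N -> (p i <= p j)%N.
Proof. by rewrite leq_eqVlt => /orP[/eqP->//|/p_lt/ltnW]. Qed.

Lemma p_ltE i j : (p i < p j)%N = (i < j)%N.
Proof.
apply/idP/idP; last exact: p_lt.
by move=> h; rewrite ltnNge; apply/negP => /p_le h'; rewrite ltnNge h' in h.
Qed.

Lemma p_leE i j : (p i <= p j)%N = (i <= j)%N.
Proof. by rewrite leqNgt p_ltE -leqNgt. Qed.

Lemma p_leR i j : (i <= j)%N -> (p i)%:R <= (p j)%:R :> R.
Proof. by move=> h; rewrite ler_nat p_le. Qed.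

Lemma okP_uniq k j1 j2 : okP k j1 -> okP k j2 -> j1 = j2.
Proof.
suff H : forall a b, okP k a -> okP k b -> ~ (a < b)%N.
  move=> h1 h2; case: (ltngtP j1 j2) => // h; [case: (H _ _ h1 h2 h)|case: (H _ _ h2 h1 h)].
move=> a b /andP[_ ha] /andP[hb _] ab.
have : alpha * (p a)%:R <= alpha * (p b.-1)%:R.
  by rewrite ler_wpM2l ?a_ge0 // p_leR //; lia.
move=> h; have := le_lt_trans (le_trans ha h) hb; by rewrite ltxx.
Qed.

Lemma okP_J k j : (1 <= k)%N -> okP k j -> j = Jf k.
Proof. by move=> hk h; case: (@Jf_spec k hk) => _ _ h'; apply: okP_uniq h h'. Qed.


Lemma p_gt0R k : (1 <= k)%N -> 0 < (p k)%:R :> R.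
Proof. by move=> h; rewrite ltr0n p_pos. Qed.

Lemma okP_expand k j : okP k j ->
  alpha * (p j.-1)%:R < (p k)%:R /\ (p k)%:R <= alpha * (p j)%:R.
Proof. by case/andP. Qed.

Lemma p_recR k : (1 <= k)%N -> (p k.+1)%:R = (p k)%:R + (p (Jf k))%:R :> R.
Proof. by move=> h; rewrite p_rec // natrD. Qed.

Lemma J_step k : (1 <= k)%N -> (Jf k <= Jf k.+1 <= (Jf k).+1)%N.
Proof.
move=> hk.
case: (@Jf_spec k hk) => j1 jk /okP_expand [u1 u2].
case: (@Jf_spec k.+1 isT) => j1' jk' /okP_expand [u1' u2'].
have pk := p_lt_succ k.
have pkR : (p k)%:R < (p k.+1)%:R :> R by rewrite ltr_nat.
apply/andP; split.
  rewrite leqNgt; apply/negP => h.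
  have : alpha * (p (Jf k.+1))%:R <= alpha * (p (Jf k).-1)%:R.
    by rewrite ler_wpM2l ?a_ge0 // p_leR //; lia.
  move=> h2.
  have := le_lt_trans (le_trans u2' h2) u1.
  by move=> h3; have := lt_trans h3 pkR; rewrite ltxx.
rewrite leqNgt; apply/negP => h.
set j := Jf k in j1 jk u1 u2 h *.
case: (@Jf_spec j j1) => _ _ /okP_expand [_ q2].
have e : (p j.+1)%:R = (p j)%:R + (p (Jf j))%:R :> R by apply: p_recR.
have h2 : alpha * (p j.+1)%:R <= alpha * (p (Jf k.+1).-1)%:R.
  by rewrite ler_wpM2l ?a_ge0 // p_leR //; lia.
have e2 := p_recR hk.
have : (p k.+1)%:R <= alpha * (p j.+1)%:R :> R.
  rewrite e mulrDr e2; apply: lerD => //.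
move=> h3; have := le_lt_trans (le_trans h3 h2) u1'; by rewrite ltxx.
Qed.

Lemma J_mono a b : (1 <= a)%N -> (a <= b)%N -> (Jf a <= Jf b)%N.
Proof.
move=> ha; elim: b => [|b IH]; first by lia.
rewrite leq_eqVlt => /orP[/eqP->//|]; rewrite ltnS => hb.
have := J_step (leq_trans ha hb); have := IH hb; lia.
Qed.

Lemma J_ge1 k : (1 <= k)%N -> (1 <= Jf k)%N.
Proof. by move=> h; case: (@Jf_spec k h). Qed.

Lemma J_lt k : (2 <= k)%N -> (Jf k < k)%N.
Proof.
move=> hk; case: (@Jf_spec k (ltnW hk)) => _ jk /okP_expand [u1 _].
rewrite ltn_neqAle jk andbT; apply/negP => /eqP e.
rewrite e in u1.
have e2 := @p_recR k.-1 ltac:(lia).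
rewrite prednK in e2; last lia.
have hJ : (p (Jf k.-1))%:R <= (p k.-1)%:R :> R.
  by apply: p_leR; apply: Jf_le.
have hp : 0 <= (p k.-1)%:R :> R by rewrite ler0n.
have : alpha * (p k.-1)%:R >= 2 * (p k.-1)%:R by rewrite ler_wpM2r.
move=> h; clear e jk hk; lra.
Qed.

Lemma p_tele i t : (1 <= i)%N ->
  (p i)%:R + t%:R * (p (Jf i))%:R <= (p (i + t))%:R :> R.
Proof.
move=> hi; elim: t => [|t IH]; first by rewrite addn0 mul0r addr0.
rewrite addnS p_recR; last lia.
have : (p (Jf i))%:R <= (p (Jf (i + t)))%:R :> R.
  by apply: p_leR; apply: J_mono => //; lia.
rewrite -natr1 mulrDl mul1r; move=> h; lra.
Qed.

Definition lag k := (k - Jf k)%N.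

Lemma lag_bound k : (1 <= k)%N -> (lag k)%:R <= alpha ^+ 2 :> R.
Proof.
move=> hk; rewrite /lag.
set i := Jf k.
have i1 : (1 <= i)%N by apply: J_ge1.
have ik : (i <= k)%N by apply: Jf_le.
have := p_tele (k - i) i1; rewrite subnKC //.
case: (@Jf_spec k hk) => _ _ /okP_expand [_ u2].
case: (@Jf_spec i i1) => _ _ /okP_expand [_ q2].
set L := (k - i)%:R; set a := (p i)%:R; set b := (p (Jf i))%:R; set c := (p k)%:R.
move=> h.
have a0 : 0 < a by apply: p_gt0R.
have L0 : 0 <= L by rewrite ler0n.
have b0 : 0 <= b by rewrite ler0n.
(* alpha*c >= alpha*a + L*alpha*b >= alpha*a + L*a; alpha*c <= alpha^2 a *)
have h1 : alpha * a + L * a <= alpha * c.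
  have : L * a <= L * (alpha * b) by rewrite ler_wpM2l.
  have : alpha * (a + L * b) <= alpha * c by rewrite ler_wpM2l ?a_ge0.
  move=> u v; rewrite mulrDr in u; lra.
have h2 : alpha * c <= alpha ^+ 2 * a.
  by rewrite expr2 -mulrA ler_wpM2l ?a_ge0.
have : L * a <= alpha ^+ 2 * a.
  have : 0 <= alpha * a by apply: mulr_ge0; [exact: a_ge0|exact: ltW].
  lra.
by rewrite ler_pM2r.
Qed.

Lemma lag_step k : (1 <= k)%N -> (lag k <= lag k.+1)%N.
Proof. move=> hk; have := J_step hk; have := Jf_le k; rewrite /lag; lia. Qed.


Lemma lag_boundN k : (1 <= k)%N -> (lag k <= Num.Def.archi_bound (alpha ^+ 2))%N.
Proof.
move=> hk; have h := lag_bound hk.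
have := archi_boundP (x := alpha ^+ 2) (exprn_ge0 2 a_ge0).
move=> h2; have := le_lt_trans h h2; rewrite ltr_nat; exact: ltnW.
Qed.

Lemma structure : exists m K, [/\ (1 <= m)%N, (m < K)%N &
  forall k, (K <= k)%N -> (Jf k + m)%N = k].
Proof.
pose f n := lag n.+2.
have mono : forall n, (f n <= f n.+1)%N by move=> n; apply: lag_step.
have bnd : forall n, (f n <= Num.Def.archi_bound (alpha ^+ 2))%N.
  by move=> n; apply: lag_boundN.
have [N HN] := ev_const mono bnd.
exists (f N), N.+2; split.
- rewrite /f /lag; have := @J_lt N.+2 isT; lia.
- rewrite /f /lag; have := @J_ge1 N.+2 isT; lia.
- move=> k hk; have := HN (k.-2) ltac:(lia); rewrite /f prednK; last lia.
  rewrite prednK; last lia.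
  rewrite /lag => <-; have := Jf_le k; lia.
Qed.


Section Win.
Variables (m K : nat).
Hypotheses (m1 : (1 <= m)%N) (mK : (m < K)%N)
  (HJ : forall k, (K <= k)%N -> (Jf k + m)%N = k).

Lemma inW i j : (K < i + m)%N -> in_window alpha i j = (j == (i + m)%N).
Proof.
move=> hi; apply/idP/eqP.
  move=> h; have h' : okP j i by exact: h.
  have j1 : (1 <= j)%N.
    case: j h h' => [|j] // _ /okP_expand [u _].
    have : 0 <= alpha * (p i.-1)%:R by apply: mulr_ge0; [exact: a_ge0|exact: ler0n].
    by rewrite p0 in u => v; have := le_lt_trans v u; rewrite ltxx.
  have e := okP_J j1 h'.
  case: (leqP K j) => hj.
    by have := HJ hj; rewrite -e; lia.
  have := J_mono j1 (ltnW hj).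
  rewrite -e; have := HJ (leqnn K); lia.
move=> ->.
have e := HJ (ltnW hi).
have ei : Jf (i + m) = i by lia.
have := @Jf_spec (i + m) ltac:(lia); rewrite ei; case=> _ _ h; exact: h.
Qed.

Lemma maxW_eq i : (K < i + m)%N -> maxW alpha i = p (i + m).
Proof.
move=> hi; rewrite /maxW.
set S := [set _ | _].
have : S (p (i + m)).
  split; first by exists (i + m)%N; rewrite inW // eqxx.
  by move=> j; rewrite inW // => /eqP ->.
move=> hS; have := xgetPex 0%N (ex_intro _ _ hS).
by case=> [[j [hj ->]]] _; move: hj; rewrite inW // => /eqP ->.
Qed.

Lemma Phat_eq i : (K < i + m)%N -> Phat alpha i = p (i + m).+1.
Proof.
move=> hi; rewrite /Phat maxW_eq //.
set S := [set _ | _].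
have : S (p (i + m).+1).
  split; first by exists (i + m).+1.
  split; first by apply: p_lt_succ.
  by move=> j; rewrite p_ltE p_leE.
move=> hS; have := xgetPex 0%N (ex_intro _ _ hS).
case=> [[j ->]] [h1 h2]; have := h2 (i + m).+1 (p_lt_succ _).
move: h1; rewrite p_ltE p_leE => h1 h3.
by have -> : j = (i + m).+1 by lia.
Qed.

End Win.

End Basic.

Lemma geo_small (R : realType) (y e : R) : 0 <= y < 1 -> 0 < e -> exists q : nat, y ^+ q < e.
Proof.
case/andP=> y0 y1 e0.
have hy : `|y| < 1 by rewrite ger0_norm.
have := cvg_expr hy; move/cvgr0Pnorm_lt => /(_ e e0) [N _ HN].
exists N; have := HN N (leqnn N); rewrite /= ger0_norm //; exact: exprn_ge0.
Qed.

Lemma expr_anti (R : realType) (w : R) a b : 0 <= w -> w <= 1 -> (a <= b)%N -> w ^+ b <= w ^+ a.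
Proof.
move=> w0 w1 ab; rewrite -(subnKC ab) exprD.
rewrite -{2}(mulr1 (w ^+ a)) ler_wpM2l ?exprn_ge0 //; exact: exprn_ile1.
Qed.

Module Sq.
Section Seq.
Variables (R : realType) (m n0 : nat) (w : R) (b : nat -> R).
Hypotheses (w0 : 0 < w) (w1 : w < 1)
  (Hrec : forall n, (n0 <= n)%N -> b (n + m).+1 = w * b (n + m) + (1 - w) * b n).

Lemma conv_le l h u v : l <= u <= h -> l <= v <= h -> l <= w * u + (1 - w) * v <= h.
Proof.
move: (w0) (w1) => W0 W1.
case/andP=> u1 u2 /andP[v1 v2].
have a1 : w * l <= w * u by rewrite ler_wpM2l // ltW.
have a2 : w * u <= w * h by rewrite ler_wpM2l // ltW.
have c : 0 <= 1 - w by lra.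
have a3 : (1 - w) * l <= (1 - w) * v by rewrite ler_wpM2l.
have a4 : (1 - w) * v <= (1 - w) * h by rewrite ler_wpM2l.
apply/andP; split; nra.
Qed.

Lemma inv k l h : (n0 <= k)%N -> (forall t, (t <= m)%N -> l <= b (k + t) <= h) ->
  forall j, (k <= j)%N -> l <= b j <= h.
Proof.
move: (w0) (w1) => W0 W1.
move=> hk H.
have Hq : forall q t, (t <= m)%N -> l <= b (k + q + t)%N <= h.
  elim=> [|q IH] t ht; first by rewrite addn0; apply: H.
  case: (ltnP t m) => htm.
    rewrite (_ : (k + q.+1 + t = k + q + t.+1)%N); [exact: IH|lia].
  have -> : (k + q.+1 + t = (k + q + m).+1)%N by lia.
  rewrite Hrec; last lia.
  apply: conv_le; first exact: IH.
  by have := IH 0%N (leq0n m); rewrite addn0.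
move=> j hj; have := Hq (j - k)%N 0%N (leq0n _); by rewrite addn0 subnKC.
Qed.

Lemma contract k l h : (n0 <= k)%N -> (forall t, (t <= m)%N -> l <= b (k + t) <= h) ->
  forall t, (t <= m)%N ->
  w ^+ m.+1 * b (k + m) + (1 - w ^+ m.+1) * l <= b ((k + m).+1 + t)%N <=
  w ^+ m.+1 * b (k + m) + (1 - w ^+ m.+1) * h.
Proof.
move: (w0) (w1) => W0 W1.
move=> hk H.
have Hin := inv hk H.
have /andP[B1 B2] : l <= b (k + m) <= h by apply: Hin; apply: leq_addr.
have gen : forall t, w ^+ t.+1 * b (k + m) + (1 - w ^+ t.+1) * l <= b ((k + m).+1 + t)%N <=
    w ^+ t.+1 * b (k + m) + (1 - w ^+ t.+1) * h.
  elim=> [|t IH].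
    rewrite addn0 Hrec // expr1.
    have /andP[c1 c2] := Hin k (leqnn k).
    have c : 0 <= 1 - w by lra.
    have a3 : (1 - w) * l <= (1 - w) * b k by rewrite ler_wpM2l.
    have a4 : (1 - w) * b k <= (1 - w) * h by rewrite ler_wpM2l.
    apply/andP; split; nra.
  have -> : ((k + m).+1 + t.+1 = ((k + t.+1) + m).+1)%N by lia.
  rewrite Hrec; last lia.
  have -> : (k + t.+1 + m = (k + m).+1 + t)%N by lia.
  have /andP[c1 c2] := Hin (k + t.+1)%N (leq_addr _ _).
  case/andP: IH => d1 d2.
  set W := w ^+ t.+1 in d1 d2 *.
  set y := b ((k + m).+1 + t)%N in d1 d2 *.
  set z := b (k + t.+1)%N in c1 c2 *.
  set B := b (k + m) in B1 B2 d1 d2 *.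
  rewrite exprS -/W.
  have c : 0 <= 1 - w by lra.
  have e1 : w * (W * B + (1 - W) * l) <= w * y by rewrite ler_wpM2l // ltW.
  have e2 : w * y <= w * (W * B + (1 - W) * h) by rewrite ler_wpM2l // ltW.
  have a3 : (1 - w) * l <= (1 - w) * z by rewrite ler_wpM2l.
  have a4 : (1 - w) * z <= (1 - w) * h by rewrite ler_wpM2l.
  apply/andP; split; nra.
move=> t ht; have /andP[g1 g2] := gen t.
set W := w ^+ t.+1 in g1 g2; set D := w ^+ m.+1.
have WD : D <= W by apply: expr_anti => //; lra.
set B := b (k + m) in B1 B2 g1 g2 *.
have f1 : 0 <= (W - D) * (h - B) by apply: mulr_ge0; lra.
have f2 : 0 <= (W - D) * (B - l) by apply: mulr_ge0; lra.
apply/andP; split; nra.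
Qed.

Definition dlt := w ^+ m.+1.

Lemma dlt_bounds : 0 < dlt /\ dlt <= 1.
Proof. by split; [exact: exprn_gt0|apply: exprn_ile1; apply: ltW]. Qed.

Lemma iterate k0 l0 h0 : (n0 <= k0)%N -> (forall t, (t <= m)%N -> l0 <= b (k0 + t) <= h0) ->
  forall q, exists l h, h - l <= (1 - dlt) ^+ q * (h0 - l0) /\
    forall t, (t <= m)%N -> l <= b (k0 + q * m.+1 + t)%N <= h.
Proof.
move: (w0) (w1) => W0 W1.
move=> hk0 H0; elim=> [|q [l [h [hl Hw]]]].
  by exists l0, h0; split; [rewrite expr0 mul1r|move=> t ht; rewrite mul0n addn0; apply: H0].
have hk : (n0 <= k0 + q * m.+1)%N by lia.
have C := contract hk Hw.
exists (dlt * b (k0 + q * m.+1 + m)%N + (1 - dlt) * l), (dlt * b (k0 + q * m.+1 + m)%N + (1 - dlt) * h).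
split.
  have [d0 d1] := dlt_bounds.
  have : (1 - dlt) * (h - l) <= (1 - dlt) * ((1 - dlt) ^+ q * (h0 - l0)).
    by rewrite ler_wpM2l //; lra.
  rewrite exprS -mulrA; lra.
move=> t ht; have := C t ht.
by rewrite (_ : (k0 + q.+1 * m.+1 + t = (k0 + q * m.+1 + m).+1 + t)%N) //; rewrite mulSn; lia.
Qed.

Lemma cauchy k0 l0 h0 : (n0 <= k0)%N -> (forall t, (t <= m)%N -> l0 <= b (k0 + t) <= h0) ->
  forall e, 0 < e -> exists M, forall j1 j2, (M <= j1)%N -> (M <= j2)%N -> `|b j1 - b j2| <= e.
Proof.
move: (w0) (w1) => W0 W1.
move=> hk0 H0 e e0.
have lh : l0 <= h0 by have /andP[u v] := H0 0%N (leq0n m); lra.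
have [d0 d1] := dlt_bounds.
have [q hq] : exists q : nat, (1 - dlt) ^+ q < e / (h0 - l0 + 1).
  apply: geo_small; last by apply: divr_gt0 => //; lra.
  apply/andP; split; nra.
have [l [h [hl Hw]]] := iterate hk0 H0 q.
exists (k0 + q * m.+1)%N => j1 j2 h1 h2.
have I := inv (k:= (k0 + q * m.+1)%N) ltac:(lia) Hw.
have /andP[a1 a2] := I j1 h1; have /andP[b1 b2] := I j2 h2.
have C0 : 0 <= h0 - l0 by lra.
have : (1 - dlt) ^+ q * (h0 - l0) <= e.
  have E : e / (h0 - l0 + 1) * (h0 - l0) <= e.
    rewrite mulrAC ler_pdivrMr; last lra.
    have : 0 <= e * (h0 - l0) by apply: mulr_ge0; lra.
    lra.
  apply: le_trans E; rewrite ler_wpM2r //; exact: ltW.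
move=> he; rewrite ler_norml; apply/andP; split; nra.
Qed.

Lemma zero N1 : (forall n, (N1 <= n)%N -> 0 <= b n) ->
  (forall e, 0 < e -> exists M, forall j, (M <= j)%N -> b j <= e) ->
  forall j, (N1 + n0 + m <= j)%N -> b j = 0.
Proof.
move: (w0) (w1) => W0 W1.
move=> pos lim j hj.
case: (eqVneq (b j) 0) => // hne; exfalso.
set s := (j - m)%N.
have js : j = (s + m)%N by rewrite /s subnK //; lia.
have bpos : 0 < b j.
  rewrite lt0r; apply/andP; split; first exact: hne.
  apply: pos; lia.
have C1 : forall t, w ^+ t * b j <= b (j + t)%N.
  elim=> [|t IH]; first by rewrite expr0 mul1r addn0.
  rewrite addnS js -addnA (addnC m) addnA Hrec; last lia.
  rewrite -addnA (addnC t) addnA -js exprSr -mulrA.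
  have : 0 <= (1 - w) * b (s + t)%N by apply: mulr_ge0; [lra|apply: pos; lia].
  have : w * (w ^+ t * b j) <= w * b (j + t)%N by rewrite ler_wpM2l // ltW.
  rewrite mulrA (mulrC w (w ^+ t)) -mulrA. lra.
set beta := w ^+ m * b j.
have beta0 : 0 < beta by apply: mulr_gt0 => //; exact: exprn_gt0.
have C2 : forall q t, (t <= m)%N -> beta <= b (j + q + t)%N.
  elim=> [|q IH] t ht.
    rewrite addn0; apply: le_trans (C1 t); rewrite /beta ler_pM2r //.
    apply: expr_anti => //; lra.
  case: (ltnP t m) => htm.
    rewrite (_ : (j + q.+1 + t = j + q + t.+1)%N); [exact: IH|lia].
  have -> : (j + q.+1 + t = ((j + q) + m).+1)%N by lia.
  rewrite Hrec; last lia.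
  have u := IH m (leqnn m); have v := IH 0%N (leq0n m); rewrite addn0 in v.
  have a1 : w * beta <= w * b (j + q + m)%N by rewrite ler_wpM2l // ltW.
  have a2 : (1 - w) * beta <= (1 - w) * b (j + q)%N by rewrite ler_wpM2l //; lra.
  lra.
have [M HM] := lim (beta / 2) ltac:(apply: divr_gt0 => //).
have := HM (M + j)%N (leq_addr _ _).
have := C2 M 0%N (leq0n m); rewrite addn0 (addnC M) => u v; lra.
Qed.

End Seq.
End Sq.
Import Sq.

Lemma root_ex (R : realType) (m : nat) : (1 <= m)%N ->
  exists x : R, [/\ 1 < x, x < 2 & x ^+ m.+1 = x ^+ m + 1].
Proof.
move=> m1.
pose q : {poly R} := 'X^(m.+1) - 'X^m - 1.
have q1 : q.[1] = -1 by rewrite /q !hornerE !expr1n; lra.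
have q2 : q.[2] = 2 ^+ m - 1 by rewrite /q !hornerE exprS; lra.
have h2 : 2 <= 2 ^+ m :> R.
  have : 1 <= (2:R) ^+ m.-1 by apply: exprn_ege1; lra.
  by rewrite -(prednK m1) exprS => h; lra.
have [x /andP[x1 x2] rx] : exists2 x : R, 1 <= x <= 2 & root q x.
  by apply: poly_ivt; [lra| rewrite q1 q2; apply/andP; split; lra].
move: rx; rewrite /root /q !hornerE subr_eq0 => /eqP e.
exists x; split => //.
- rewrite lt_neqAle x1 andbT; apply/negP => /eqP ex; rewrite -ex !expr1n in e; lra.
- rewrite lt_neqAle x2 andbT; apply/negP => /eqP ex; rewrite ex exprS in e; lra.
- lra.
Qed.

Fixpoint Dif (f : nat -> nat) i : nat -> nat :=
  match i with 0 => f | i'.+1 => fun n => (Dif f i' n.+1 - Dif f i' n)%N end.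

Lemma geom_int_contra (R : realType) (x : R) (f : nat -> nat) :
  1 < x -> x < 2 -> (forall n, (f n.+1)%:R = x * (f n)%:R) -> (0 < f 0)%N -> False.
Proof.
move=> x1 x2 hf f0.
have V : forall i n, (Dif f i n)%:R = (x - 1) ^+ i * (f n)%:R.
  elim=> [|i IH] n; first by rewrite expr0 mul1r.
  have le : (Dif f i n <= Dif f i n.+1)%N.
    rewrite -(ler_nat R) !IH hf.
    have : 0 <= (x - 1) ^+ i * (f n)%:R by apply: mulr_ge0; [apply: exprn_ge0; lra|exact: ler0n].
    move=> h; rewrite mulrCA; nra.
  by rewrite /= natrB // !IH hf exprSr; ring.
have pos : forall i, (0 < Dif f i 0)%N.
  move=> i; rewrite -(ltr_nat R) V; apply: mulr_gt0; first by apply: exprn_gt0; lra.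
  by rewrite ltr0n.
have dec : forall i, (Dif f i.+1 0 < Dif f i 0)%N.
  move=> i; rewrite -(ltr_nat R) !V exprSr -mulrA.
  have h : 0 < (x - 1) ^+ i * (f 0)%:R by rewrite -V ltr0n.
  rewrite mulrCA; nra.
have S : forall i, (Dif f i 0 + i <= Dif f 0 0)%N.
  elim=> [|i IH]; first by rewrite addn0.
  have := dec i; lia.
have := S (Dif f 0 0); have := pos (Dif f 0 0); lia.
Qed.

Ltac slia := repeat match goal with H : ?T |- _ =>
  lazymatch T with
  | is_true (leq _ _) => fail
  | @eq nat _ _ => fail
  | nat => fail
  | _ => clear H
  end end; lia.

Lemma divle (R : realType) (x A B : R) i j : 0 <= A -> A <= B -> 1 <= x -> (i <= j)%N ->
  A / x ^+ j <= B / x ^+ i.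
Proof.
move=> A0 AB x1 ij.
have xi : 0 < x ^+ i by apply: exprn_gt0; lra.
have xj : 0 < x ^+ j by apply: exprn_gt0; lra.
apply: (@le_trans _ _ (A / x ^+ i)).
  apply: ler_wpM2l => //; rewrite lef_pV2 ?posrE //; exact: ler_weXn2l.
by apply: ler_wpM2r => //; rewrite invr_ge0 ltW.
Qed.

Lemma eps0 (R : realType) (y : R) : (forall e, 0 < e -> `|y| <= e) -> y = 0.
Proof.
move=> H; case: (eqVneq y 0) => // hy; exfalso.
have h0 : 0 < `|y| by rewrite normr_gt0.
have := H (`|y| / 2) ltac:(apply: divr_gt0 => //); lra.
Qed.

Unset Implicit Arguments.

Theorem mainTheorem2 (R : realType) (alpha : R) :
  2 <= alpha ->
  exists r1 : R, 1 < r1 /\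
    Q alpha @ \oo --> r1 /\
    (forall N : nat, exists n : nat, (N < n)%N /\ r1 < Q alpha n) /\
    (forall N : nat, exists n : nat, (N < n)%N /\ Q alpha n < r1).
Proof.
move=> Ha.
have [m [K [m1 mK HJ]]] := structure Ha.
have [x [x1 x2 xe]] := root_ex R m1.
set n0 := (K - m)%N.
have n01 : (1 <= n0)%N by rewrite /n0; slia.
pose a k := (P alpha k)%:R / x ^+ k.
have x0 : 0 < x by lra.
have xn0 : forall k, x ^+ k != 0 by move=> k; rewrite expf_neq0 // gt_eqF.
have xk0 : forall k, 0 < x ^+ k by move=> k; apply: exprn_gt0.
set w := x^-1.
have w0 : 0 < w by rewrite /w invr_gt0.
have w1 : w < 1 by rewrite /w invf_lt1 //.
have wE : 1 - w = (x ^+ m.+1)^-1.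
  have H : (1 - w) * x ^+ m.+1 = 1.
    rewrite mulrBl mul1r /w exprS mulKf ?gt_eqF // -exprS; lra.
  by apply: (mulIf (xn0 m.+1)); rewrite H mulVf.
have Prec : forall n, (n0 <= n)%N -> P alpha (n + m).+1 = (P alpha (n + m) + P alpha n)%N.
  move=> n hn; rewrite (p_rec Ha (k := (n + m)%N)); last slia.
  by have := HJ (n + m)%N ltac:(rewrite /n0 in hn; slia) => e; congr (_ + P alpha _)%N; slia.
have Hrec : forall n, (n0 <= n)%N -> a (n + m).+1 = w * a (n + m) + (1 - w) * a n.
  move=> n hn; rewrite /a Prec // natrD wE /w.
  rewrite !exprSr exprD; field.
  by rewrite !xn0 gt_eqF.
set l0 := (P alpha n0)%:R / x ^+ (n0 + m).
set h0 := (P alpha (n0 + m))%:R / x ^+ n0.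
have l0p : 0 < l0 by apply: divr_gt0 => //; exact: p_gt0R.
have W0 : forall t, (t <= m)%N -> l0 <= a (n0 + t)%N <= h0.
  move=> t ht; apply/andP; split.
    apply: divle; [exact: ler0n | apply: (p_leR Ha); exact: leq_addr | exact: ltW | by rewrite leq_add2l].
  apply: divle; [exact: ler0n | apply: (p_leR Ha); by rewrite leq_add2l | exact: ltW | exact: leq_addr].
have cau := Sq.cauchy w0 w1 Hrec (leqnn n0) W0.
have apos : forall j, (n0 <= j)%N -> l0 <= a j.
  by move=> j hj; have /andP[] := Sq.inv w0 w1 Hrec (leqnn n0) W0 hj.
have pa : forall j, (P alpha j)%:R = a j * x ^+ j by move=> j; rewrite /a divfK.
set c0 := x ^+ m.+1.
have c0p : 0 < c0 by apply: xk0.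
have Qdiff : forall i, (n0 < i)%N -> Q alpha i - c0 = (c0 / a i) * (a (i + m).+1 - a i).
  move=> i hi; rewrite /Q (Phat_eq Ha m1 mK HJ); last by rewrite /n0 in hi; slia.
  have ai : 0 < a i by apply: lt_le_trans (apos i (ltnW hi)).
  rewrite !pa -addnS exprD /c0; field.
  by rewrite xn0 gt_eqF.
have c01 : 1 < c0 by rewrite /c0 xe; have := exprn_ege1 m (ltW x1); lra.
have osc : forall c : R, `|c| = 1 -> forall N1,
    (forall n, (N1 <= n)%N -> 0 <= c * (a n - a (n + m.+1)%N)) -> False.
  move=> c c1 N1 hpos.
  pose d n := c * (a n - a (n + m.+1)%N).
  have Hd : forall n, (n0 <= n)%N -> d (n + m).+1 = w * d (n + m) + (1 - w) * d n.
    move=> n hn; rewrite /d.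
    have -> : ((n + m).+1 + m.+1 = ((n + m.+1) + m).+1)%N by slia.
    have -> : (n + m + m.+1 = (n + m.+1) + m)%N by slia.
    rewrite Hrec // Hrec; last slia.
    ring.
  have dlim : forall e, 0 < e -> exists M, forall j, (M <= j)%N -> d j <= e.
    move=> e e0; have [M HM] := cau e e0; exists M => j hj.
    rewrite /d; apply: le_trans (ler_norm _) _; rewrite normrM c1 mul1r.
    by apply: HM => //; slia.
  have Z := Sq.zero w0 w1 Hd hpos dlim.
  set J0 := (N1 + n0 + m)%N in Z.
  have per1 : forall j, (J0 <= j)%N -> a (j + m.+1)%N = a j.
    move=> j hj; have := Z j hj; rewrite /d => /eqP; rewrite mulf_eq0 subr_eq0.
    case/orP => [/eqP c0'|/eqP -> //]; by rewrite c0' normr0 in c1; have := @ltr01 R; lra.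
  have per : forall j t, (J0 <= j)%N -> a (j + t * m.+1)%N = a j.
    move=> j t hj; elim: t => [|t IH]; first by rewrite mul0n addn0.
    have -> : (j + t.+1 * m.+1 = (j + t * m.+1) + m.+1)%N by rewrite mulSn; slia.
    by rewrite per1 ?IH //; slia.
  have const : forall j, (J0 <= j)%N -> a j.+1 = a j.
    move=> j hj; apply/eqP; rewrite -subr_eq0; apply/eqP; apply: eps0 => e e0.
    have [M HM] := cau e e0.
    rewrite -(per j M hj) -(per j.+1 M) ?addSn; last slia.
    have hM : (M <= M * m.+1)%N by apply: leq_pmulr.
    by rewrite distrC; apply: HM; slia.
  have J01 : (1 <= J0)%N by rewrite /J0; slia.
  apply: (@geom_int_contra R x (fun n => P alpha (J0 + n)%N)) => //.
    move=> n; rewrite addnS !pa const; last slia.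
    by rewrite exprS; ring.
  by apply: p_pos; [exact: Ha|slia].
exists c0; split => //; split.
  apply/cvgrPdist_le => e e0.
  set e' := e * l0 / c0.
  have e'0 : 0 < e' by apply: divr_gt0 => //; apply: mulr_gt0.
  have [M HM] := cau e' e'0.
  exists (M + n0.+1)%N => // i /= hi.
  have hQ := Qdiff i ltac:(slia).
  rewrite distrC hQ.
  have ai : 0 < a i by apply: lt_le_trans (apos i _); [exact: l0p|slia].
  have D := HM (i + m).+1 i ltac:(slia) ltac:(slia).
  set D0 := `|a (i + m).+1 - a i| in D *.
  rewrite normrM ger0_norm; last by apply: divr_ge0; [exact: ltW|exact: ltW].
  have D00 : 0 <= D0 by apply: normr_ge0.
  have h1 : c0 / a i * D0 <= c0 / l0 * D0.
    apply: ler_wpM2r => //; apply: ler_wpM2l; first exact: ltW.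
    by rewrite lef_pV2 ?posrE //; apply: apos; slia.
  apply: le_trans h1 _.
  have h2 : c0 / l0 * D0 <= c0 / l0 * e'.
    by apply: ler_wpM2l => //; apply: divr_ge0; apply: ltW.
  apply: le_trans h2 _.
  rewrite /e' le_eqVlt; apply/orP; left; apply/eqP; field.
  by rewrite !gt_eqF.
split.
  move=> N; case: (pselect (exists n, (N < n)%N /\ c0 < Q alpha n)) => // hn; exfalso.
  apply: (osc 1 (normr1 _) (N.+1 + n0.+1)%N) => n hn'.
  rewrite mul1r subr_ge0.
  have : Q alpha n <= c0.
    rewrite leNgt; apply/negP => h; apply: hn; exists n; split => //; slia.
  rewrite -subr_le0 => hQ.
  have e := Qdiff n ltac:(slia).
  have ai : 0 < a n by apply: lt_le_trans (apos n _); [exact: l0p|slia].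
  have hQ' : c0 / a n * (a (n + m).+1 - a n) <= 0 by rewrite -e subr_le0.
  by move: hQ'; rewrite pmulr_rle0 ?addnS //; apply: divr_gt0.
move=> N; case: (pselect (exists n, (N < n)%N /\ Q alpha n < c0)) => // hn; exfalso.
apply: (osc (-1) (normrN1 _) (N.+1 + n0.+1)%N) => n hn'.
rewrite mulN1r oppr_ge0 subr_le0.
have : c0 <= Q alpha n.
  rewrite leNgt; apply/negP => h; apply: hn; exists n; split => //; slia.
rewrite -subr_ge0 => hQ.
have e := Qdiff n ltac:(slia).
have ai : 0 < a n by apply: lt_le_trans (apos n _); [exact: l0p|slia].
have hQ' : 0 <= c0 / a n * (a (n + m).+1 - a n) by rewrite -e subr_ge0.
by move: hQ'; rewrite pmulr_rge0 ?addnS //; apply: divr_gt0.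
Qed.
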